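(* Let $p$ be a prime and $X$ a countable set. A matrix $M=(a_{ij})_{i,j\in X}$ with entries in $\mathbb{Q}_p$ is of the form $M=M_A$ for some $A\in\mathcal{B}(\mathbb{Q}_p(X))$ if and only if (a) $M$ has only finitely many entries in $\mathbb{Q}_p\setminus\mathbb{Z}_p$, and (b) for every $k\in X$ one has $\lim_{i\to\infty}a_{ik}=0$ and $\lim_{j\to\infty}a_{kj}=0$ (limits along the cofinite filter on $X$, i.e. for every $\varepsilon>0$ only finitely many $i$ satisfy $|a_{ik}|_p>\varepsilon$, and similarly for $j$).
   Context: $\mathbb{Q}_p(X)$ is the set of maps $\xi:X\to\mathbb{Q}_p$ with $|\xi(i)|_p\le1$ for all but finitely many $i$, a $\mathbb{Z}_p$-module under coordinatewise operations, with the topology $\tau$ in which $A\subseteq\mathbb{Q}_p(X)$ is open iff for every finite $P\subseteq X$ the set $A\cap\big(\prod_{i\in P}\mathbb{Q}_p\times\prod_{j\in X\setminus P}\mathbb{Z}_p\big)$ is open in the product topology. $\mathcal{B}(\mathbb{Q}_p(X))$ is the set of $\tau$-continuous $\mathbb{Z}_p$-linear maps on $\mathbb{Q}_p(X)$. For $x\in X$, $\delta_x\in\mathbb{Q}_p(X)$ is given by $\delta_x(x)=1$, $\delta_x(y)=0$ for $y\ne x$. For $A\in\mathcal{B}(\mathbb{Q}_p(X))$, its matrix is $M_A=(A_{ij})_{i,j\in X}$ with $A_{ij}=(A\delta_j)(i)$. *)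

(* Defs.v *)
From HB Require Import structures.
From mathcomp Require Import all_boot all_order all_algebra.
From mathcomp Require Import boolp classical_sets cardinality.
Set Implicit Arguments. Unset Strict Implicit. Unset Printing Implicit Defensive.
Import Order.TTheory GRing.Theory Num.Theory.
Local Open Scope ring_scope.
Local Open Scope classical_set_scope.

(* An element alpha of Q_p is represented by the sequence (x_n)_n of its   *)
(* canonical residues: x_n is the unique element of Z[1/p] with            *)
(* 0 <= x_n < p^n and alpha - x_n in p^n Z_p.  (Q_p = lim Z[1/p]/p^n Z.)   *)
(* This representation is unique, so Leibniz equality on representatives  *)
(* is equality in Q_p.                                                     *)

Definition Qp := nat -> rat.

Section Padic.
Variable p : nat.
Local Notation P := (p%:Q).

Definition isQp (x : Qp) : Prop :=
  [/\ forall n : nat, 0 <= x n < P ^+ n,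
      forall n : nat, (x n.+1 - x n) / P ^+ n \is a Num.int
    & exists k : nat, P ^+ k * x 0%N \is a Num.int].

Definition rmod (r m : rat) : rat := r - m * (Num.floor (r / m))%:~R.

(* canonical image of a rational of Z[1/p] in Q_p *)
Definition fromQ (r : rat) : Qp := fun n => rmod r (P ^+ n).

Definition pzero : Qp := fromQ 0.
Definition pone : Qp := fromQ 1.

Definition padd (x y : Qp) : Qp := fun n => rmod (x n + y n) (P ^+ n).
Definition popp (x : Qp) : Qp := fun n => rmod (- x n) (P ^+ n).
Definition psub (x y : Qp) : Qp := padd x (popp y).

(* least k with p^k x_0 integral, i.e. -min(v_p(x),0) *)
Definition pden (x : Qp) : nat :=
  match pselect (exists k : nat, P ^+ k * x 0%N \is a Num.int) with
  | left h => @ex_minn (fun k : nat => P ^+ k * x 0%N \is a Num.int) h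
  | right _ => 0%N
  end.

Definition pmul (x y : Qp) : Qp :=
  fun n => rmod (x (n + (pden x + pden y))%N * y (n + (pden x + pden y))%N)
                (P ^+ n).

Definition pnorm (x : Qp) : rat :=
  if (0 < pden x)%N then P ^+ pden x
  else match pselect (exists n : nat, x n != 0) with
       | left h => P ^- (@ex_minn (fun n : nat => x n != 0) h).-1
       | right _ => 0
       end.

Variable X : countType.

Definition inQpX (xi : X -> Qp) : Prop :=
  (forall i, isQp (xi i)) /\ finite_set [set i | 1 < pnorm (xi i)].

Definition SP (F : set X) : set (X -> Qp) :=
  [set xi | (forall i, isQp (xi i)) /\ forall i, ~ F i -> pnorm (xi i) <= 1].

(* B is open in S_P for the product topology (Q_p, Z_p metric topologies) *)
Definition open_in_SP (F : set X) (B : set (X -> Qp)) : Prop :=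
  forall xi, SP F xi -> B xi ->
    exists G : set X, finite_set G /\
    exists eps : rat, 0 < eps /\
      forall eta, SP F eta ->
        (forall i, G i -> pnorm (psub (eta i) (xi i)) < eps) -> B eta.

Definition tau_open (U : set (X -> Qp)) : Prop :=
  (forall xi, U xi -> inQpX xi) /\
  forall F : set X, finite_set F -> open_in_SP F (U `&` SP F).

Definition vadd (xi eta : X -> Qp) : X -> Qp := fun i => padd (xi i) (eta i).
Definition vscale (a : Qp) (xi : X -> Qp) : X -> Qp := fun i => pmul a (xi i).

(* A : Q_p(X) -> Q_p(X) (values outside Q_p(X) are irrelevant) is a
   tau-continuous Z_p-linear map, i.e. A is in B(Q_p(X)). *)
Definition in_B (A : (X -> Qp) -> (X -> Qp)) : Prop :=
  [/\ forall xi, inQpX xi -> inQpX (A xi),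
      forall xi eta, inQpX xi -> inQpX eta -> A (vadd xi eta) = vadd (A xi) (A eta),
      forall a xi, isQp a -> pnorm a <= 1 -> inQpX xi ->
                   A (vscale a xi) = vscale a (A xi)
    & forall U, tau_open U -> tau_open [set xi | inQpX xi /\ U (A xi)]].

Definition delta (x : X) : X -> Qp := fun y => if y == x then pone else pzero.

End Padic.

(* Main.v *)
Require Import Defs.
From HB Require Import structures.
From mathcomp Require Import all_boot all_order all_algebra.
From mathcomp Require Import boolp classical_sets cardinality.
From mathcomp Require Import ring lra zify.
Set Implicit Arguments. Unset Strict Implicit. Unset Printing Implicit Defensive.
Import Order.TTheory GRing.Theory Num.Theory.
Local Open Scope ring_scope.
Local Open Scope classical_set_scope.

Section Arith.
Variable p : nat.
Hypothesis hp : (1 < p)%N.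
Local Notation P := (p%:Q).

Lemma P_gt1 : 1 < P.
Proof. by rewrite ltr1n. Qed.
Lemma P_gt0 : 0 < P.
Proof. by rewrite ltr0n (ltn_trans _ hp). Qed.
Lemma Pn_gt0 n : 0 < P ^+ n.
Proof. exact: exprn_gt0 P_gt0. Qed.
Lemma Pn_neq0 n : P ^+ n != 0.
Proof. by rewrite gt_eqF ?Pn_gt0. Qed.
Lemma Pn_int n : P ^+ n \is a Num.int.
Proof. by rewrite rpredX // intr_nat ?natr_nat. Qed.

Definition cong n (r s : rat) := (r - s) / P ^+ n \is a Num.int.

Lemma cong_refl n r : cong n r r.
Proof. by rewrite /cong subrr mul0r. Qed.
Lemma cong_sym n r s : cong n r s -> cong n s r.
Proof. by rewrite /cong -opprB mulNr rpredN. Qed.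
Lemma cong_trans n r s t : cong n r s -> cong n s t -> cong n r t.
Proof.
rewrite /cong => h1 h2; have := rpredD h1 h2.
by rewrite -mulrDl addrA subrK.
Qed.
Lemma congD n a b c d : cong n a b -> cong n c d -> cong n (a + c) (b + d).
Proof.
rewrite /cong => h1 h2.
have -> : (a + c - (b + d)) / P ^+ n = (a - b) / P ^+ n + (c - d) / P ^+ n.
  by rewrite -mulrDl; congr (_ * _); ring.
exact: rpredD.
Qed.
Lemma congN n a b : cong n a b -> cong n (- a) (- b).
Proof. by rewrite /cong -opprD mulNr rpredN. Qed.
Lemma congB n a b c d : cong n a b -> cong n c d -> cong n (a - c) (b - d).
Proof. by move=> h1 h2; apply: congD => //; apply: congN. Qed.
Lemma cong0 n a : cong n a 0 <-> (a / P ^+ n \is a Num.int).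
Proof. by rewrite /cong subr0. Qed.

Lemma cong_le m n a b : (m <= n)%N -> cong n a b -> cong m a b.
Proof.
move=> le; rewrite /cong => h.
move: h; rewrite -(subnKC le); set k := (n - m)%N => h.
have -> : (a - b) / P ^+ m = (a - b) / P ^+ (m + k) * P ^+ k.
  rewrite exprD; field; rewrite !Pn_neq0 //.
by rewrite rpredM ?Pn_int.
Qed.

Definition bnd k (r : rat) := P ^+ k * r \is a Num.int.

Lemma cong_mulb n k t a b : bnd k t -> cong (n + k) a b -> cong n (t * a) (t * b).
Proof.
rewrite /bnd /cong => ht h.
have -> : (t * a - t * b) / P ^+ n = (P ^+ k * t) * ((a - b) / P ^+ (n + k)).
  rewrite exprD invfM; field; rewrite !Pn_neq0 //.
by rewrite rpredM.
Qed.
Lemma cong_mulz n t a b : t \is a Num.int -> cong n a b -> cong n (t * a) (t * b).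
Proof.
move=> ht h; apply: (@cong_mulb n 0); first by rewrite /bnd expr0 mul1r.
by rewrite addn0.
Qed.

Lemma bnd_le k k' r : (k <= k')%N -> bnd k r -> bnd k' r.
Proof.
move=> le; rewrite /bnd => h; rewrite -(subnK le) exprD -mulrA rpredM ?Pn_int //.
Qed.
Lemma bndD k r s : bnd k r -> bnd k s -> bnd k (r + s).
Proof. by rewrite /bnd mulrDr; apply: rpredD. Qed.
Lemma bndN k r : bnd k r -> bnd k (- r).
Proof. by rewrite /bnd mulrN rpredN. Qed.
Lemma bndM a b r s : bnd a r -> bnd b s -> bnd (a + b) (r * s).
Proof.
rewrite /bnd => h1 h2.
have -> : P ^+ (a + b) * (r * s) = (P ^+ a * r) * (P ^+ b * s) by rewrite exprD; ring.
exact: rpredM.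
Qed.
Lemma bnd_int k r : r \is a Num.int -> bnd k r.
Proof. by move=> h; rewrite /bnd rpredM ?Pn_int. Qed.
Lemma bnd_cong k r s : bnd k r -> cong 0 r s -> bnd k s.
Proof.
rewrite /cong expr0 divr1 => h1 h2.
have -> : s = r - (r - s) by ring.
by apply: bndD => //; apply/bndN/bnd_int.
Qed.

Lemma int_lt1 (z : rat) : z \is a Num.int -> `|z| < 1 -> z = 0.
Proof.
case/intrP=> m ->; rewrite -intr_norm => h.
have : (`|m| < 1)%R by rewrite -(ltr_int rat).
by case: m {h} => [[|n]|n] //.
Qed.

Lemma cong_eq n a b : 0 <= a < P ^+ n -> 0 <= b < P ^+ n -> cong n a b -> a = b.
Proof.
move=> /andP[a0 a1] /andP[b0 b1] h.
have := int_lt1 h; rewrite normrM normfV (gtr0_norm (Pn_gt0 n)).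
rewrite ltr_pdivrMr ?Pn_gt0 // mul1r.
have -> : `|a - b| < P ^+ n.
  rewrite ltr_norml; apply/andP; split; lra.
move=> /(_ isT) /eqP; rewrite mulf_eq0 invr_eq0 (negbTE (Pn_neq0 _)) orbF subr_eq0.
by move/eqP.
Qed.

Lemma rmod_range n r : 0 <= rmod r (P ^+ n) < P ^+ n.
Proof.
rewrite /rmod; have hP := Pn_gt0 n.
have h1 := floor_le (r / P ^+ n); have h2 := floorD1_gt (r / P ^+ n).
rewrite intrD in h2.
set f := ((Num.floor (r / P ^+ n))%:~R : rat) in h1 h2 *.
have e : r = (r / P ^+ n) * P ^+ n by rewrite divfK ?Pn_neq0.
set q := r / P ^+ n in h1 h2 e *.
rewrite e; apply/andP; split; nra.
Qed.

Lemma rmod_cong n r : cong n (rmod r (P ^+ n)) r.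
Proof.
rewrite /cong /rmod.
have -> : (r - P ^+ n * (Num.floor (r / P ^+ n))%:~R - r) / P ^+ n
   = - (Num.floor (r / P ^+ n))%:~R.
  field; rewrite Pn_neq0 //.
by rewrite rpredN intr_int.
Qed.

Lemma val_rmod n z r : 0 <= z < P ^+ n -> cong n z r -> z = rmod r (P ^+ n).
Proof.
move=> hz h; apply: (cong_eq hz (rmod_range n r)).
by apply: cong_trans h (cong_sym (rmod_cong n r)).
Qed.

Lemma rmod_eq n r s : cong n r s -> rmod r (P ^+ n) = rmod s (P ^+ n).
Proof.
move=> h; apply: val_rmod; first exact: rmod_range.
exact: cong_trans (rmod_cong n r) h.
Qed.

Lemma rmod_id n r : 0 <= r < P ^+ n -> rmod r (P ^+ n) = r.
Proof. by move=> h; symmetry; apply: val_rmod h (cong_refl _ _). Qed.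

Lemma rmod0 n : rmod 0 (P ^+ n) = 0.
Proof. by apply: rmod_id; rewrite lexx Pn_gt0. Qed.

Lemma rmod_cong_le m n r : (m <= n)%N -> cong m (rmod r (P ^+ n)) r.
Proof. by move=> le; apply: cong_le le (rmod_cong n r). Qed.


Lemma isQp_range x n : isQp p x -> 0 <= x n < P ^+ n.
Proof. by case=> h _ _. Qed.

Lemma isQp_cong x n N : isQp p x -> (n <= N)%N -> cong n (x N) (x n).
Proof.
move=> hx; elim: N => [|N IH]; first by rewrite leqn0 => /eqP ->; apply: cong_refl.
rewrite leq_eqVlt => /orP[/eqP ->|]; first exact: cong_refl.
rewrite ltnS => le; apply: cong_trans (IH le).
case: hx => _ h _; apply: (cong_le le); exact: (h N).
Qed.

Lemma isQp_rmod x n N : isQp p x -> (n <= N)%N -> x n = rmod (x N) (P ^+ n).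
Proof.
move=> hx le; apply: val_rmod => //; first exact: isQp_range.
exact: cong_sym (isQp_cong hx le).
Qed.

Lemma isQp_zero_le x n N : isQp p x -> (n <= N)%N -> x N = 0 -> x n = 0.
Proof. by move=> hx le e; rewrite (isQp_rmod hx le) e rmod0. Qed.

Lemma pden_spec x : isQp p x -> bnd (pden p x) (x 0%N).
Proof.
move=> hx; rewrite /pden; case: pselect => [h|h].
  by case: ex_minnP.
by exfalso; apply: h; case: hx.
Qed.

Lemma pden_min x k : isQp p x -> bnd k (x 0%N) -> (pden p x <= k)%N.
Proof.
move=> hx hk; rewrite /pden; case: pselect => [h|h] //.
by case: ex_minnP => v _ /(_ k hk).
Qed.

Lemma bnd_all x k n : isQp p x -> bnd k (x 0%N) -> bnd k (x n).
Proof.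
move=> hx hk; apply: bnd_cong hk _; apply: cong_sym; exact: isQp_cong.
Qed.

Lemma bnd_pden x n : isQp p x -> bnd (pden p x) (x n).
Proof. by move=> hx; apply: bnd_all => //; apply: pden_spec. Qed.

Lemma x0_bnd0 x : isQp p x -> (x 0%N = 0 <-> bnd 0 (x 0%N)).
Proof.
move=> hx; split; first by move->; rewrite /bnd mulr0 rpred0.
rewrite /bnd expr0 mul1r => h; apply: int_lt1 => //.
have := isQp_range 0 hx; rewrite expr0 => /andP[h1 h2].
by rewrite ger0_norm.
Qed.

Lemma pden0 x : isQp p x -> x 0%N = 0 -> pden p x = 0%N.
Proof.
move=> hx /(x0_bnd0 hx) h; apply/eqP; rewrite -leqn0; exact: pden_min.
Qed.

Lemma pden_pos x : isQp p x -> x 0%N != 0 -> (0 < pden p x)%N.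
Proof.
move=> hx x0; rewrite lt0n; apply/eqP => e.
have : x 0%N = 0 by apply: (proj2 (x0_bnd0 hx)); have := pden_spec hx; rewrite e.
by move/eqP: x0.
Qed.

Lemma Pinv_le a b : (P ^- a <= P ^- b) = (b <= a)%N.
Proof.
rewrite lef_pV2 ?posrE ?Pn_gt0 //; exact: (ler_eXn2l P_gt1).
Qed.

Lemma Pinv_gt0 m : 0 < P ^- m.
Proof. by rewrite invr_gt0 Pn_gt0. Qed.

Lemma pnorm_le x m : isQp p x -> (pnorm p x <= P ^- m <-> x m = 0).
Proof.
move=> hx; rewrite /pnorm.
have [hd|hd] := boolP (0 < pden p x)%N.
  have x0 : x 0%N != 0 by apply: contraTneq hd => /(pden0 hx) ->.
  split=> [h|h]; last by move: x0; rewrite (isQp_zero_le hx (leq0n m) h) eqxx.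
  exfalso; move: h; apply/negP; rewrite -ltNge.
  apply: (@le_lt_trans _ _ 1).
    by rewrite invf_le1 ?Pn_gt0 // exprn_ege1 // ltW // P_gt1.
  by rewrite exprn_egt1 ?P_gt1 // -lt0n.
have x0 : x 0%N = 0.
  apply: (proj2 (x0_bnd0 hx)); move: (hd); rewrite lt0n negbK => /eqP e; have := pden_spec hx; by rewrite e.
destruct (pselect _) as [h|h].
  case: ex_minnP => v hv hmin.
  have v0 : v != 0%N by apply: contraNneq hv => ->; rewrite x0.
  rewrite Pinv_le; split=> [le|xm].
    apply/eqP; apply: contraT => xm; have := hmin m xm.
    move=> vm; move: v0 le vm; clear; lia.
  have : (m < v)%N.
    rewrite ltnNge; apply/negP => le.
    by move: hv; rewrite (isQp_zero_le hx le xm) eqxx.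
  move: v0; clear; lia.
split=> _; first by apply/eqP; apply: contraT => xm; case: h; exists m.
by rewrite ltW // Pinv_gt0.
Qed.


Lemma cong_sub0 n a b : cong n 0 (a - b) -> cong n a b.
Proof. by rewrite /cong sub0r mulNr rpredN. Qed.

Lemma isQp_mk (s : nat -> rat) k :
  (forall n, cong n (s n.+1) (s n)) -> bnd k (s 0%N) ->
  isQp p (fun n => rmod (s n) (P ^+ n)).
Proof.
move=> hs hk; split.
- by move=> n; apply: rmod_range.
- move=> n; apply: cong_trans (rmod_cong_le _ (leqnSn n)) _.
  apply: cong_trans (hs n) _; exact: cong_sym (rmod_cong n (s n)).
- exists k; apply: bnd_cong hk _; exact: cong_sym (rmod_cong 0 (s 0%N)).
Qed.

Lemma pzero_n n : pzero p n = 0.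
Proof. exact: rmod0. Qed.

Lemma pone_n n : (0 < n)%N -> pone p n = 1.
Proof.
move=> n0; apply: rmod_id; rewrite ler01 /=.
by rewrite exprn_egt1 ?P_gt1 // -lt0n.
Qed.

Lemma isQp_fromQ r k : bnd k r -> isQp p (fromQ p r).
Proof. by move=> h; apply: (@isQp_mk (fun _ => r) k) => // n; apply: cong_refl. Qed.

Lemma isQp_pzero : isQp p (pzero p).
Proof. by apply: (@isQp_fromQ 0 0); rewrite /bnd mulr0 rpred0. Qed.

Lemma isQp_pone : isQp p (pone p).
Proof. by apply: (@isQp_fromQ 1 0); rewrite /bnd expr0 mulr1 rpred1. Qed.

Lemma isQp_padd x y : isQp p x -> isQp p y -> isQp p (padd p x y).
Proof.
move=> hx hy; apply: (@isQp_mk (fun n => x n + y n) (pden p x + pden p y)).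
  by move=> n; apply: congD; apply: isQp_cong.
apply: bndD; apply: bnd_le (pden_spec _) => //; [exact: leq_addr|exact: leq_addl].
Qed.

Lemma isQp_popp x : isQp p x -> isQp p (popp p x).
Proof.
move=> hx; apply: (@isQp_mk (fun n => - x n) (pden p x)).
  by move=> n; apply: congN; apply: isQp_cong.
by apply: bndN; apply: pden_spec.
Qed.

Lemma isQp_psub x y : isQp p x -> isQp p y -> isQp p (psub p x y).
Proof. by move=> hx hy; apply: isQp_padd => //; apply: isQp_popp. Qed.

Lemma psub_zero x y n : isQp p x -> isQp p y -> (psub p x y n = 0 <-> x n = y n).
Proof.
move=> hx hy; rewrite /psub /padd /popp; split=> [h|->].
  apply: cong_eq; try exact: isQp_range.
  apply: cong_sub0; rewrite -h.
  apply: cong_trans (rmod_cong _ _) _.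
  by apply: congD (cong_refl _ _) (rmod_cong _ _).
rewrite (@rmod_eq _ _ 0) ?rmod0 //.
have -> : 0 = y n + - y n by rewrite subrr.
by apply: congD (cong_refl _ _) (rmod_cong _ _).
Qed.

Lemma padd_self z : isQp p z -> padd p z z = z -> z = pzero p.
Proof.
move=> hz e; apply: funext => n; rewrite pzero_n.
have h : cong n (z n) (z n + z n) by rewrite -{1}e; apply: rmod_cong.
apply: cong_eq; first exact: isQp_range.
  by rewrite lexx Pn_gt0.
move: h; rewrite /cong.
have -> : (z n - (z n + z n)) / P ^+ n = - ((z n - 0) / P ^+ n) by ring.
by rewrite rpredN.
Qed.

Lemma PMgen x y a b n m m' : isQp p x -> isQp p y ->
  bnd a (x 0%N) -> bnd b (y 0%N) -> (n + a + b <= m)%N -> (m <= m')%N ->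
  cong n (x m' * y m') (x m * y m).
Proof.
move=> hx hy ha hb le1 le2.
have c1 : cong (n + b) (x m') (x m).
  apply: cong_le (isQp_cong hx le2); move: le1; clear; lia.
have c2 : cong (n + a) (y m') (y m).
  apply: cong_le (isQp_cong hy le2); move: le1; clear; lia.
have d1 := cong_mulb (bnd_all m' hy hb) c1.
have d2 := cong_mulb (bnd_all m hx ha) c2.
rewrite mulrC; apply: cong_trans d1 _; rewrite mulrC; exact: d2.
Qed.

Lemma PM x y a b n m : isQp p x -> isQp p y ->
  bnd a (x 0%N) -> bnd b (y 0%N) -> (n + a + b <= m)%N ->
  cong n (pmul p x y n) (x m * y m).
Proof.
move=> hx hy ha hb le; rewrite /pmul.
apply: cong_trans (rmod_cong _ _) _.
apply: cong_sym; apply: (@PMgen x y (pden p x) (pden p y)) => //;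
  try exact: pden_spec.
  by rewrite addnA.
have := pden_min hx ha; have := pden_min hy hb; move: le; clear; lia.
Qed.

Lemma bnd_pmul0 x y a b : isQp p x -> isQp p y ->
  bnd a (x 0%N) -> bnd b (y 0%N) -> bnd (a + b) (pmul p x y 0%N).
Proof.
move=> hx hy ha hb; rewrite /pmul.
apply: bnd_cong (cong_sym (rmod_cong _ _)).
apply: bnd_le (bndM (bnd_pden _ hx) (bnd_pden _ hy)).
by apply: leq_add; apply: pden_min.
Qed.

Lemma isQp_pmul x y : isQp p x -> isQp p y -> isQp p (pmul p x y).
Proof.
move=> hx hy.
apply: (@isQp_mk (fun n => x (n + (pden p x + pden p y))%N * y (n + (pden p x + pden p y))%N)
   (pden p x + pden p y)).
  move=> n; apply: (@PMgen x y (pden p x) (pden p y));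
    try exact: pden_spec; try exact: hx; try exact: hy; lia.
exact: bndM (bnd_pden _ hx) (bnd_pden _ hy).
Qed.

Lemma cong_eq0 n z r : 0 <= z < P ^+ n -> cong n z r -> r = 0 -> z = 0.
Proof. by move=> hz h e; subst r; apply: cong_eq hz _ h; rewrite lexx Pn_gt0. Qed.

Lemma pmul_zero_l x y n e : isQp p x -> isQp p y ->
  x (n + e)%N = 0 -> bnd e (y 0%N) -> pmul p x y n = 0.
Proof.
move=> hx hy xz hb.
have ha : bnd 0 (x 0%N).
  by apply/(x0_bnd0 hx); apply: isQp_zero_le hx (leq0n _) xz.
apply: (cong_eq0 (isQp_range _ (isQp_pmul hx hy)) (PM hx hy ha hb (leqnn _))).
by rewrite addn0 xz mul0r.
Qed.

Lemma pmul_zero_r x y n e : isQp p x -> isQp p y ->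
  bnd e (x 0%N) -> y (n + e)%N = 0 -> pmul p x y n = 0.
Proof.
move=> hx hy ha yz.
have hb : bnd 0 (y 0%N).
  by apply/(x0_bnd0 hy); apply: isQp_zero_le hy (leq0n _) yz.
apply: (cong_eq0 (isQp_range _ (isQp_pmul hx hy)) (PM hx hy ha hb (leqnn _))).
by rewrite addn0 yz mulr0.
Qed.

Lemma pmul_pzero x n : isQp p x -> pmul p x (pzero p) n = 0.
Proof.
move=> hx; apply: (@pmul_zero_r _ _ _ (pden p x)) => //.
- exact: isQp_pzero.
- exact: pden_spec.
- exact: pzero_n.
Qed.

Lemma pmul_pone x n : isQp p x -> pmul p x (pone p) n = x n.
Proof.
move=> hx.
have h := @PM x (pone p) (pden p x) 0 n (n + pden p x + 0).+1 hx isQp_pone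
   (pden_spec hx) (proj1 (x0_bnd0 isQp_pone) (pzero_n 0)) (leqnSn _).
rewrite pone_n // mulr1 in h.
apply: cong_eq; try exact: isQp_range; first exact: isQp_range (isQp_pmul hx isQp_pone).
apply: cong_trans h _; apply: isQp_cong => //; lia.
Qed.

Lemma bnd_padd0 y z : isQp p y -> isQp p z ->
  bnd (pden p y + pden p z) (padd p y z 0%N).
Proof.
move=> hy hz; rewrite /padd.
apply: bnd_cong (cong_sym (rmod_cong _ _)).
apply: bndD; apply: bnd_le (pden_spec _) => //; [exact: leq_addr|exact: leq_addl].
Qed.

Lemma PD x y z n : isQp p x -> isQp p y -> isQp p z ->
  cong n (pmul p x (padd p y z) n) (pmul p x y n + pmul p x z n).
Proof.
move=> hx hy hz.
set a := pden p x; set b := (pden p y + pden p z)%N; set m := (n + a + b)%N.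
have ha : bnd a (x 0%N) by exact: pden_spec.
have h1 := PM hx (isQp_padd hy hz) ha (bnd_padd0 hy hz) (leqnn m).
have h2 : cong (n + a) (padd p y z m) (y m + z m).
  by apply: rmod_cong_le; rewrite /m; apply: leq_addr.
have h3 := cong_mulb (bnd_all m hx ha) h2.
have hyb : bnd b (y 0%N) by apply: bnd_le (pden_spec hy); apply: leq_addr.
have hzb : bnd b (z 0%N) by apply: bnd_le (pden_spec hz); apply: leq_addl.
have h4 := PM hx hy ha hyb (leqnn m).
have h5 := PM hx hz ha hzb (leqnn m).
apply: cong_trans h1 _; apply: cong_trans h3 _; rewrite mulrDr.
by apply: congD; apply: cong_sym.
Qed.

Lemma PA x a y D E n : isQp p x -> isQp p a -> isQp p y ->
  bnd D (x 0%N) -> bnd 0 (a 0%N) -> bnd E (y 0%N) ->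
  cong n (pmul p x (pmul p a y) n) (a (n + D + E)%N * pmul p x y (n + D + E)%N).
Proof.
move=> hx ha hy hD h0 hE.
move eL: (n + D + E)%N => L; move eL': (L + D + E)%N => L'.
have hay := isQp_pmul ha hy.
have hE' : bnd E (pmul p a y 0%N) by have := bnd_pmul0 ha hy h0 hE; rewrite add0n.
have s1 : cong n (pmul p x (pmul p a y) n) (x L * pmul p a y L) by apply: PM hx hay hD hE' _; lia.
have s2 : cong L (pmul p a y L) (a L' * y L').
  by apply: PM ha hy h0 hE _; lia.
have s2' : cong (n + D) (pmul p a y L) (a L' * y L').
  by apply: cong_le s2; lia.
have s2'' := cong_mulb (bnd_all L hx hD) s2'.
have s3 : cong (n + E) (x L) (x L').
  apply: cong_sym; apply: cong_le (isQp_cong hx _); lia.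
have bay : bnd E (a L' * y L') by rewrite -[E]add0n; apply: bndM; apply: bnd_all.
have s3' := cong_mulb bay s3.
have s4 : cong L (pmul p x y L) (x L' * y L') by apply: PM hx hy hD hE _; lia.
have s4' : cong (n + 0) (pmul p x y L) (x L' * y L').
  by apply: cong_le s4; rewrite addn0 -eL -addnA leq_addr.
have s4'' := cong_mulb (bnd_all L ha h0) s4'.
have le1 : (L <= L')%N by rewrite -eL'; apply: leq_trans (leq_addr E _); apply: leq_addr.
have le2 : (n + (D + E) <= L)%N by rewrite -eL addnA.
have s5 : cong (n + (D + E)) (a L') (a L) := cong_le le2 (isQp_cong ha le1).
have bxy : bnd (D + E) (x L' * y L') by apply: bndM; apply: bnd_all.
have s5' := cong_mulb bxy s5.
apply: cong_trans s1 _; apply: cong_trans s2'' _.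
rewrite [X in cong _ X _]mulrC; apply: cong_trans s3' _.
have -> : a L' * y L' * x L' = x L' * y L' * a L' by ring.
apply: cong_trans s5' _.
rewrite mulrC; exact: cong_sym s4''.
Qed.

Lemma pnorm_gt1 x : isQp p x -> (1 < pnorm p x <-> x 0%N != 0).
Proof.
move=> hx; have := pnorm_le 0 hx; rewrite expr0 invr1 => h; split.
  by move=> lt; apply/eqP => /h; rewrite leNgt lt.
by move=> nz; rewrite ltNge; apply/negP => /h /eqP; rewrite (negbTE nz).
Qed.

Lemma cong_sum (T : Type) n (s : seq T) (f g : T -> rat) :
  (forall j, cong n (f j) (g j)) ->
  cong n (\sum_(j <- s) f j) (\sum_(j <- s) g j).
Proof.
move=> h; elim: s => [|a s IH]; first by rewrite !big_nil; apply: cong_refl.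
by rewrite !big_cons; apply: congD.
Qed.

Lemma bnd_sum (T : Type) k (s : seq T) (f : T -> rat) :
  (forall j, bnd k (f j)) -> bnd k (\sum_(j <- s) f j).
Proof.
move=> h; elim: s => [|a s IH]; first by rewrite big_nil /bnd mulr0 rpred0.
by rewrite big_cons; apply: bndD.
Qed.

Lemma natr_le_Pn m : (m%:R : rat) <= P ^+ m.
Proof.
elim: m => [|m IH]; first by rewrite expr0 ler01.
rewrite exprS -natr1; have h1 : 1 <= P ^+ m by rewrite exprn_ege1 // ltW // P_gt1.
have h2 : 2 <= P by rewrite ler_nat.
nra.
Qed.

Lemma exists_m (eps : rat) : 0 < eps -> exists m, P ^- m < eps.
Proof.
move=> he; exists (Num.Def.archi_bound eps^-1).
have hi : 0 <= eps^-1 by rewrite invr_ge0 ltW.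
have h := archi_boundP hi.
set m := Num.Def.archi_bound _ in h *.
have h2 := lt_le_trans h (natr_le_Pn m).
by rewrite -[X in _ < X]invrK ltf_pV2 ?posrE ?invr_gt0 ?Pn_gt0.
Qed.

Variable X : countType.

Lemma sum_filter (f : X -> rat) (s : seq X) :
  \sum_(j <- s) f j = \sum_(j <- [seq j <- s | f j != 0]) f j.
Proof.
rewrite big_filter [RHS]big_mkcond; apply: eq_bigr => j _.
by case: eqP => [->|].
Qed.

Lemma sum_supp (f : X -> rat) (s t : seq X) : uniq s -> uniq t ->
  (forall j, f j != 0 -> j \in s) -> (forall j, f j != 0 -> j \in t) ->
  \sum_(j <- s) f j = \sum_(j <- t) f j.
Proof.
move=> us ut hs ht.
rewrite sum_filter [RHS]sum_filter; apply: perm_big; apply: uniq_perm; try exact: filter_uniq.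
move=> j; rewrite !mem_filter; case nz: (f j != 0) => //=.
by rewrite hs ?ht.
Qed.

Definition cover (f : X -> rat) : seq X :=
  match pselect (exists s : seq X, uniq s /\ forall j, f j != 0 -> j \in s) with
  | left h => projT1 (cid h)
  | right _ => [::]
  end.

Definition fsum (f : X -> rat) : rat := \sum_(j <- cover f) f j.

Lemma fsumE (f : X -> rat) (s : seq X) : uniq s ->
  (forall j, f j != 0 -> j \in s) -> fsum f = \sum_(j <- s) f j.
Proof.
move=> us hs; rewrite /fsum /cover.
destruct (pselect _) as [h|h].
  case: (cid h) => t [ut ht] /=; exact: sum_supp.
by exfalso; apply: h; exists s.
Qed.

Lemma fin_list (T : eqType) (S : set T) : finite_set S ->
  exists s : seq T, uniq s /\ forall j, S j -> j \in s.
Proof.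
move/finite_seqP => [s e]; exists (undup s); split; first exact: undup_uniq.
by move=> j; rewrite e mem_undup.
Qed.

Lemma list_fin (T : eqType) (S : set T) (s : seq T) :
  (forall j, S j -> j \in s) -> finite_set S.
Proof. by move=> h; apply: (sub_finite_set (B := [set` s])) => // j /h. Qed.

Lemma fin_bound (T : eqType) (S : set T) (f : T -> nat) : finite_set S ->
  exists K, forall x, S x -> (f x <= K)%N.
Proof.
move/fin_list => [s [_ hs]]; exists (\max_(x <- s) f x) => x /hs xs.
exact: (@leq_bigmax_seq _ _ predT).
Qed.

Lemma list_union (T : eqType) (s t : seq T) :
  exists u : seq T, uniq u /\ (forall j, j \in s -> j \in u) /\ (forall j, j \in t -> j \in u).
Proof.
exists (undup (s ++ t)); split; first exact: undup_uniq.
by split=> j; rewrite mem_undup mem_cat => ->; rewrite ?orbT.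
Qed.

Variable M : X -> X -> Qp.

Definition Qfin (xi : X -> Qp) :=
  (forall j, isQp p (xi j)) /\ finite_set [set j | xi j 0%N != 0].

Lemma inQpX_Qfin xi : inQpX p xi <-> Qfin xi.
Proof.
split=> [[h1 h2]|[h1 h2]]; split=> //.
  by apply: sub_finite_set h2 => j /= /(pnorm_gt1 (h1 j)).
by apply: sub_finite_set h2 => j /= /(pnorm_gt1 (h1 j)).
Qed.

Lemma bound_of (f : X -> Qp) :
  (forall j, isQp p (f j)) -> finite_set [set j | f j 0%N != 0] ->
  exists E, forall j, bnd E (f j 0%N).
Proof.
move=> hf fin; have [K hK] := fin_bound (fun j => pden p (f j)) fin.
exists K => j; have [z|nz] := eqVneq (f j 0%N) 0.
  by rewrite z /bnd mulr0 rpred0.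
by apply: bnd_le (pden_spec (hf j)); apply: hK.
Qed.

Section Back.
Hypothesis hM : forall i j, isQp p (M i j).
Hypothesis H0 : finite_set [set ij : X * X | M ij.1 ij.2 0%N != 0].
Hypothesis Hcol : forall k m, finite_set [set i | M i k m != 0].
Hypothesis Hrow : forall k m, finite_set [set j | M k j m != 0].

Lemma Dbound : exists D, forall i j, bnd D (M i j 0%N).
Proof.
have [K hK] := fin_bound (fun ij : X * X => pden p (M ij.1 ij.2)) H0.
exists K => i j; have [z|nz] := eqVneq (M i j 0%N) 0.
  by rewrite z /bnd mulr0 rpred0.
by apply: bnd_le (pden_spec (hM i j)); apply: (hK (i, j)).
Qed.

Definition term (xi : X -> Qp) i j n := pmul p (M i j) (xi j) n.
Definition Aop (xi : X -> Qp) : X -> Qp :=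
  fun i n => rmod (fsum (fun j => term xi i j n)) (P ^+ n).

Lemma term_nz xi i j n : Qfin xi -> term xi i j n != 0 ->
  xi j 0%N != 0 \/ M i j n != 0.
Proof.
move=> [hx _] nz; have [z|] := eqVneq (xi j 0%N) 0; last by left.
right; apply/eqP => mz; move: nz; rewrite /term.
rewrite (@pmul_zero_l _ _ _ 0) ?addn0 ?eqxx //.
exact/(x0_bnd0 (hx j)).
Qed.

Lemma term_fin xi i n : Qfin xi -> finite_set [set j | term xi i j n != 0].
Proof.
move=> hq; apply: (sub_finite_set (B := [set j | xi j 0%N != 0] `|` [set j | M i j n != 0])).
  by move=> j /= /(term_nz hq) [h|h]; [left|right].
by rewrite finite_setU; split => //; case: hq.
Qed.

Lemma common_list (f g : X -> rat) : finite_set [set j | f j != 0] ->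
  finite_set [set j | g j != 0] ->
  exists u : seq X, [/\ uniq u, forall j, f j != 0 -> j \in u
                             & forall j, g j != 0 -> j \in u].
Proof.
move=> h1 h2; have := finite_setU [set j | f j != 0] [set j | g j != 0].
move=> e; have : finite_set ([set j | f j != 0] `|` [set j | g j != 0]).
  by rewrite e.
move/fin_list => [u [uu hu]]; exists u; split=> // j nz; apply: hu; by [left|right].
Qed.

Lemma bnd_Aop0 xi i D E : Qfin xi -> (forall i j, bnd D (M i j 0%N)) ->
  (forall j, bnd E (xi j 0%N)) -> bnd (D + E) (Aop xi i 0%N).
Proof.
move=> [hx _] hD hE; rewrite /Aop.
apply: bnd_cong (cong_sym (rmod_cong _ _)).
rewrite /fsum; apply: bnd_sum => j; exact: bnd_pmul0.
Qed.

Lemma isQp_Aop xi i : Qfin xi -> isQp p (Aop xi i).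
Proof.
move=> hq; have [D hD] := Dbound; have [E hE] := bound_of hq.1 hq.2.
apply: (@isQp_mk (fun n => fsum (fun j => term xi i j n)) (D + E)).
  move=> n; have [u [uu h1 h2]] := common_list (term_fin i n.+1 hq) (term_fin i n hq).
  rewrite (fsumE uu h1) (fsumE uu h2); apply: cong_sum => j.
  by apply: isQp_cong => //; apply: isQp_pmul => //; case: hq.
have := bnd_Aop0 i hq hD hE; rewrite /Aop.
move=> h; apply: bnd_cong h (rmod_cong _ _).
Qed.

Lemma fsum_nz (f : X -> rat) : fsum f != 0 -> exists j, f j != 0.
Proof.
move=> nz; have [//|h] := pselect (exists j, f j != 0).
move: nz; rewrite (@fsumE f [::]) ?big_nil ?eqxx //.
by move=> j fj; exfalso; apply: h; exists j.
Qed.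

Lemma Qfin_Aop xi : Qfin xi -> Qfin (Aop xi).
Proof.
move=> hq; split=> [i|]; first exact: isQp_Aop.
have [E hE] := bound_of hq.1 hq.2.
apply: (sub_finite_set (B := (\bigcup_(j in [set j | xi j 0%N != 0]) [set i | M i j E != 0])
     `|` (fst @` [set ij : X * X | M ij.1 ij.2 0%N != 0]))); last first.
  rewrite finite_setU; split; last exact: finite_image.
  by apply: bigcup_finite => //; case: hq.
move=> i /= nz.
have nz' : fsum (fun j => term xi i j 0%N) != 0.
  by apply: (contraNneq _ nz) => e; rewrite /Aop e rmod0.
have [j tj] := fsum_nz nz'.
have [xj|xj] := eqVneq (xi j 0%N) 0.
  right; exists (i, j) => //=; apply: contraNneq tj => mz.
  rewrite /term (@pmul_zero_l _ _ _ 0) ?addn0 //; first by case: hq.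
  exact/(x0_bnd0 (hq.1 j)).
left; exists j => //=; apply: contraNneq tj => mz.
rewrite /term (@pmul_zero_l _ _ _ E) ?add0n //; by case: hq.
Qed.

Lemma Qfin_vadd xi eta : Qfin xi -> Qfin eta -> Qfin (vadd p xi eta).
Proof.
move=> [h1 f1] [h2 f2]; split=> [j|]; first exact: isQp_padd.
apply: (sub_finite_set (B := [set j | xi j 0%N != 0] `|` [set j | eta j 0%N != 0])).
  move=> j /= nz; have [a|a] := eqVneq (xi j 0%N) 0; last by left.
  have [b|b] := eqVneq (eta j 0%N) 0; last by right.
  by move: nz; rewrite /vadd /padd a b addr0 rmod0 eqxx.
by rewrite finite_setU.
Qed.

Lemma cover3 (f g h : X -> rat) : finite_set [set j | f j != 0] ->
  finite_set [set j | g j != 0] -> finite_set [set j | h j != 0] ->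
  exists u : seq X, [/\ uniq u, forall j, f j != 0 -> j \in u,
     forall j, g j != 0 -> j \in u & forall j, h j != 0 -> j \in u].
Proof.
move=> h1 h2 h3.
have : finite_set ([set j | f j != 0] `|` [set j | g j != 0] `|` [set j | h j != 0]).
  by rewrite !finite_setU.
move/fin_list => [u [uu hu]]; exists u; split=> // j nz; apply: hu.
- by left; left.
- by left; right.
- by right.
Qed.

Lemma Aop_add xi eta : Qfin xi -> Qfin eta ->
  Aop (vadd p xi eta) = vadd p (Aop xi) (Aop eta).
Proof.
move=> hx hy; have hxy := Qfin_vadd hx hy.
apply: funext => i; apply: funext => n; rewrite /vadd /padd /Aop.
apply: rmod_eq.
have [u [uu c1 c2 c3]] := cover3 (term_fin i n hxy) (term_fin i n hx) (term_fin i n hy).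
rewrite (fsumE uu c1).
apply: cong_trans (_ : cong n _ (\sum_(j <- u) (term xi i j n + term eta i j n))) _.
  apply: cong_sum => j; exact: PD (hM _ _) (hx.1 j) (hy.1 j).
rewrite big_split /=; apply: congD.
  rewrite -(fsumE uu c2); exact: cong_sym (rmod_cong _ _).
rewrite -(fsumE uu c3); exact: cong_sym (rmod_cong _ _).
Qed.


Lemma Qfin_vscale a xi : isQp p a -> a 0%N = 0 -> Qfin xi -> Qfin (vscale p a xi).
Proof.
move=> ha a0 [h1 f1]; have b0 : bnd 0 (a 0%N) by exact/(x0_bnd0 ha).
split=> [j|]; first exact: isQp_pmul.
apply: sub_finite_set f1 => j /=; apply: contraNneq => xz.
by rewrite /vscale (@pmul_zero_r _ _ _ 0) ?addn0.
Qed.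

Lemma Aop_scale a xi : isQp p a -> pnorm p a <= 1 -> Qfin xi ->
  Aop (vscale p a xi) = vscale p a (Aop xi).
Proof.
move=> ha na hx.
have a0 : a 0%N = 0 by apply/(pnorm_le 0 ha); rewrite expr0 invr1.
have b0 : bnd 0 (a 0%N) by exact/(x0_bnd0 ha).
have hax := Qfin_vscale ha a0 hx.
have [D hD] := Dbound; have [E hE] := bound_of hx.1 hx.2.
apply: funext => i; apply: funext => n; rewrite /vscale /Aop.
set L := (n + D + E)%N.
have [u [uu c1 c2 _]] := cover3 (term_fin i n hax) (term_fin i L hx) (term_fin i L hx).
symmetry; apply: val_rmod; first exact: isQp_range (isQp_pmul ha (isQp_Aop i hx)).
have s1 : cong n (pmul p a (Aop xi i) n) (a L * Aop xi i L).
  apply: PM ha (isQp_Aop i hx) b0 (bnd_Aop0 i hx hD hE) _; rewrite /L; lia.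
apply: cong_trans s1 _.
have s2 : cong n (a L * Aop xi i L) (a L * fsum (fun j => term xi i j L)).
  apply: cong_mulb (bnd_all L ha b0) _; rewrite addn0.
  apply: cong_le (rmod_cong _ _); rewrite /L; lia.
apply: cong_trans s2 _.
rewrite (fsumE uu c1) (fsumE uu c2) mulr_sumr.
apply: cong_sum => j; apply: cong_sym.
rewrite /L /term /vscale; exact: (@PA (M i j) a (xi j) D E n (hM i j) ha (hx.1 j) (hD i j) b0 (hE j)).
Qed.

Lemma Aop_delta j : Aop (delta p j) = fun i => M i j.
Proof.
apply: funext => i; apply: funext => n; rewrite /Aop.
rewrite (@fsumE _ [:: j]) //.
  rewrite big_cons big_nil addr0 /term /delta eqxx pmul_pone //.
  by apply: rmod_id; apply: isQp_range.
move=> l; rewrite /term /delta; have [->|ne] := eqVneq l j; first by rewrite mem_seq1.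
by rewrite pmul_pzero ?eqxx.
Qed.

Lemma SP_out (F : set X) (xi : X -> Qp) j : SP p F xi -> ~ F j -> xi j 0%N = 0.
Proof.
move=> [h1 h2] nF; apply/(pnorm_le 0 (h1 j)); rewrite expr0 invr1; exact: h2.
Qed.

Lemma SP_Qfin (F : set X) (xi : X -> Qp) : finite_set F -> SP p F xi -> Qfin xi.
Proof.
move=> fF hs; split; first by case: hs.
apply: sub_finite_set fF => j /= nz; apply: contrapT => nF.
by move: nz; rewrite (SP_out hs nF) eqxx.
Qed.

Lemma Qfin_SP (xi : X -> Qp) : Qfin xi -> SP p [set j | xi j 0%N != 0] xi.
Proof.
move=> [h1 h2]; split=> // j /= nz.
have : xi j 0%N = 0.
  by have [//|ne] := eqVneq (xi j 0%N) 0; exfalso; exact: nz ne.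
by move/(pnorm_le 0 (h1 j)); rewrite expr0 invr1.
Qed.

Lemma Aop_cont (U : set (X -> Qp)) : tau_open p U -> tau_open p [set xi | inQpX p xi /\ U (Aop xi)].
Proof.
move=> [hU1 hU2]; split=> [xi [] //|F fF xi hxiF [[hxi Uy] _]].
have hx := proj1 (inQpX_Qfin xi) hxi.
have hy := Qfin_Aop hx.
have [G' [fG' [eps' [heps' hG']]]] :=
  hU2 _ hy.2 (Aop xi) (Qfin_SP hy) (conj Uy (Qfin_SP hy)).
have [m hm] := exists_m heps'.
have [D hD] := Dbound; have [E hE] := bound_of hx.1 hx.2.
set K := (m + D + E)%N.
set G := F `|` (\bigcup_(i in G') [set j | M i j m != 0])
           `|` (snd @` [set ij : X * X | M ij.1 ij.2 0%N != 0]).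
have fG : finite_set G.
  rewrite !finite_setU; split; [split=> //|exact: finite_image].
  by apply: bigcup_finite.
exists G; split=> //; exists (P ^- K); split; first exact: Pinv_gt0.
move=> eta hetaF close.
have he := SP_Qfin fF hetaF.
have eqK : forall j, G j -> eta j K = xi j K.
  move=> j Gj; have := close j Gj.
  move/ltW/(pnorm_le K (isQp_psub (he.1 j) (hx.1 j))).
  by move/(psub_zero K (he.1 j) (hx.1 j)).
have KC : forall i n, (n <= m)%N -> (forall j, M i j n != 0 -> G j) ->
    Aop eta i n = Aop xi i n.
  move=> i n le hG; rewrite /Aop; apply: rmod_eq.
  have [u [uu c1 c2 _]] := cover3 (term_fin i n he) (term_fin i n hx) (term_fin i n hx).
  rewrite (fsumE uu c1) (fsumE uu c2); apply: cong_sum => j.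
  have [Gj|nGj] := pselect (G j).
    have e0 : eta j 0%N = xi j 0%N.
      by rewrite (isQp_rmod (he.1 j) (leq0n K)) (isQp_rmod (hx.1 j) (leq0n K)) eqK.
    have hEe : bnd E (eta j 0%N) by rewrite e0.
    have t1 : cong n (term eta i j n) (M i j K * eta j K).
      by apply: PM (hM i j) (he.1 j) (hD i j) hEe _; rewrite /K; lia.
    have t2 : cong n (term xi i j n) (M i j K * xi j K).
      by apply: PM (hM i j) (hx.1 j) (hD i j) (hE j) _; rewrite /K; lia.
    by apply: cong_trans t1 _; rewrite eqK //; apply: cong_sym.
  have nF : ~ F j by move=> Fj; apply: nGj; left; left.
  have mz : M i j n = 0 by apply: contrapT => /eqP nz; apply: nGj; apply: hG.
  have ze : eta j 0%N = 0 := SP_out hetaF nF.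
  have zx : xi j 0%N = 0 := SP_out hxiF nF.
  rewrite /term !(@pmul_zero_l _ _ _ 0) ?addn0 //; try exact: cong_refl;
    try exact: hM; try exact: he.1; try exact: hx.1.
  - exact/(x0_bnd0 (hx.1 j)).
  - exact/(x0_bnd0 (he.1 j)).
have hAe := Qfin_Aop he.
split; last exact: hetaF.
split; first exact/inQpX_Qfin.
have SPe : SP p [set j | Aop xi j 0%N != 0] (Aop eta).
  split; first exact: hAe.1.
  move=> i /= nz; apply/(pnorm_le 0 (hAe.1 i)).
  have zi : Aop xi i 0%N = 0.
    by have [//|ne] := eqVneq (Aop xi i 0%N) 0; exfalso; exact: nz ne.
  rewrite KC // => j nzj; right; exists (i, j) => //.
have := hG' (Aop eta) SPe.
case => [|//]; move=> i G'i.
apply: le_lt_trans hm.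
apply/(pnorm_le m (isQp_psub (hAe.1 i) (hy.1 i))).
apply/(psub_zero m (hAe.1 i) (hy.1 i)).
apply: KC => // j nzj; left; right; exists i => //.
Qed.

Lemma back_dir : in_B p Aop /\ forall i j, M i j = Aop (delta p j) i.
Proof.
split; last by move=> i j; rewrite Aop_delta.
split.
- by move=> xi /inQpX_Qfin hx; apply/inQpX_Qfin; apply: Qfin_Aop.
- by move=> xi eta /inQpX_Qfin hx /inQpX_Qfin hy; apply: Aop_add.
- by move=> a xi ha na /inQpX_Qfin hx; apply: Aop_scale.
- exact: Aop_cont.
Qed.

End Back.

Definition vzero : X -> Qp := fun _ => pzero p.

Lemma Qfin_vzero : Qfin vzero.
Proof.
split=> [j|]; first exact: isQp_pzero.
by apply: (sub_finite_set (B := set0)) => // j /=; rewrite pzero_n eqxx.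
Qed.

Lemma inQpX_vzero : inQpX p vzero.
Proof. exact/inQpX_Qfin/Qfin_vzero. Qed.

Definition vnsum N (xi : X -> Qp) := iter N (vadd p xi) vzero.

Lemma Qfin_vnsum N xi : Qfin xi -> Qfin (vnsum N xi).
Proof.
move=> hx; elim: N => [|N IH]; first exact: Qfin_vzero.
exact: Qfin_vadd.
Qed.

Lemma vnsum_n N xi i n : isQp p (xi i) ->
  vnsum N xi i n = rmod (N%:R * xi i n) (P ^+ n).
Proof.
move=> hx; elim: N => [|N IH]; first by rewrite mul0r rmod0 /vnsum /= /vzero pzero_n.
rewrite /vnsum iterS -/(vnsum N xi) /vadd /padd IH.
apply: rmod_eq; rewrite -natr1 mulrDl mul1r addrC.
by apply: congD (rmod_cong _ _) (cong_refl _ _).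
Qed.

Section Forward.
Variable A : (X -> Qp) -> (X -> Qp).
Hypothesis hA : in_B p A.

Lemma A_Qfin xi : Qfin xi -> Qfin (A xi).
Proof. by move=> h; case: hA => h1 _ _ _; apply/inQpX_Qfin/h1/inQpX_Qfin. Qed.

Lemma A_add xi eta : Qfin xi -> Qfin eta -> A (vadd p xi eta) = vadd p (A xi) (A eta).
Proof. by case: hA => _ h2 _ _ hx hy; apply: h2; apply/inQpX_Qfin. Qed.

Lemma A_vzero : A vzero = vzero.
Proof.
have e : vadd p vzero vzero = vzero.
  apply: funext => i; apply: funext => n.
  by rewrite /vadd /padd /vzero !pzero_n addr0 rmod0.
have h := A_add Qfin_vzero Qfin_vzero; rewrite e in h.
have hq := A_Qfin Qfin_vzero.
apply: funext => i; apply: padd_self (hq.1 i) _.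
by rewrite {3}h.
Qed.

Lemma A_vnsum N xi : Qfin xi -> A (vnsum N xi) = vnsum N (A xi).
Proof.
move=> hx; elim: N => [|N IH]; first exact: A_vzero.
rewrite /vnsum !iterS -!/(vnsum _ _) A_add //; first by rewrite IH.
exact: Qfin_vnsum.
Qed.

Lemma A_col k m : finite_set [set i | A (delta p k) i m != 0].
Proof.
pose N := (p ^ m)%N.
pose xim : X -> Qp := fun i => if i == k then fromQ p (P ^- m) else pzero p.
have bm : bnd m (P ^- m) by rewrite /bnd mulfV ?Pn_neq0 // rpred1.
have hxq : Qfin xim.
  split=> [j|]; first by rewrite /xim; case: eqP => _; [exact: isQp_fromQ bm|exact: isQp_pzero].
  apply: (sub_finite_set (B := [set k])); last exact: finite_set1.
  move=> j; change (xim j 0%N != 0 -> j = k); have [->//|ne] := eqVneq j k.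
  by rewrite /xim (negbTE ne) pzero_n eqxx.
have e : vnsum N xim = delta p k.
  apply: funext => i; apply: funext => n; rewrite vnsum_n; last exact: hxq.1 i.
  rewrite /xim /delta.
  case: eqP => _; last by rewrite pzero_n mulr0 rmod0.
  rewrite /pone /fromQ; apply: rmod_eq.
  have Nint : (N%:R : rat) \is a Num.int by rewrite /N natrX; exact: Pn_int.
  apply: cong_trans (cong_mulz Nint (rmod_cong n (P ^- m))) _.
  rewrite /N natrX mulfV ?Pn_neq0 //; exact: cong_refl.
have hy := A_Qfin hxq.
apply: (sub_finite_set _ hy.2) => i /=.
rewrite -e A_vnsum // vnsum_n; last exact: hy.1 i.
apply: contraNneq => z.
rewrite (@rmod_eq _ _ 0) ?rmod0 //.
rewrite /cong subr0 /N natrX mulrAC mulfV ?Pn_neq0 // mul1r.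
have := bnd_all m (hy.1 i) (proj1 (x0_bnd0 (hy.1 i)) z).
by rewrite /bnd expr0 mul1r.
Qed.

Lemma delta_SP0 (j : X) : SP p set0 (delta p j).
Proof.
split=> [i|i _]; rewrite /delta; case: eqP => _;
  try exact: isQp_pone; try exact: isQp_pzero.
  apply/(pnorm_le 0 isQp_pone); rewrite /pone /fromQ (@rmod_eq _ _ 0) ?rmod0 //.
by apply/(pnorm_le 0 isQp_pzero); rewrite pzero_n.
Qed.

Lemma vzero_SP0 : SP p (set0 : set X) vzero.
Proof.
split=> [i|i _]; first exact: isQp_pzero.
by apply/(pnorm_le 0 isQp_pzero); rewrite pzero_n.
Qed.

Lemma A_delta_near (U : set (X -> Qp)) : tau_open p U -> U vzero ->
  exists G, finite_set G /\ forall j, ~ G j -> U (A (delta p j)).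
Proof.
move=> hU Uz; case: hA => _ _ _ /(_ U hU) [_ hV].
have := hV set0 (finite_set0 X) vzero vzero_SP0.
case=> [|G [fG [eps [heps hG]]]].
  split; last exact: vzero_SP0.
  by split; [exact: inQpX_vzero|rewrite A_vzero].
exists G; split=> // j nGj.
have [m hm] := exists_m heps.
have := hG (delta p j) (delta_SP0 j); case=> [i Gi|[[_ ?] _] //].
have ij : (i == j) = false by apply/eqP => e; apply: nGj; rewrite -e.
rewrite /delta ij; apply: le_lt_trans hm.
apply/(pnorm_le m (isQp_psub isQp_pzero isQp_pzero)).
exact/(psub_zero m isQp_pzero isQp_pzero).
Qed.

Lemma A_row k m : finite_set [set j | A (delta p j) k m != 0].
Proof.
pose U := [set eta : X -> Qp | inQpX p eta /\ eta k m = 0].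
have hU : tau_open p U.
  split=> [? [] //|F fF xi hxF [[_ xk] _]].
  exists [set k]; split; first exact: finite_set1.
  exists (P ^- m); split; first exact: Pinv_gt0.
  move=> eta heF close; split=> //; split; first exact/inQpX_Qfin/(SP_Qfin fF heF).
  have := close k erefl.
  move/ltW/(pnorm_le m (isQp_psub (heF.1 k) (hxF.1 k))).
  by move/(psub_zero m (heF.1 k) (hxF.1 k)); rewrite xk.
have [|G [fG hG]] := A_delta_near hU.
  by split; [exact: inQpX_vzero|exact: pzero_n].
apply: (sub_finite_set _ fG) => j /= nz; apply: contrapT => nGj.
by move: nz; have [_ ->] := hG j nGj; rewrite eqxx.
Qed.

Lemma A_big : finite_set [set ij : X * X | A (delta p ij.2) ij.1 0%N != 0].
Proof.
pose U := [set eta : X -> Qp | inQpX p eta /\ forall i, eta i 0%N = 0].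
have hU : tau_open p U.
  split=> [? [] //|F fF xi hxF [[_ xk] _]].
  exists F; split=> //.
  exists (P ^- 0); split; first exact: Pinv_gt0.
  move=> eta heF close; split=> //; split; first exact/inQpX_Qfin/(SP_Qfin fF heF).
  move=> i; have [Fi|nFi] := pselect (F i); last exact: SP_out heF nFi.
  have := close i Fi.
  move/ltW/(pnorm_le 0 (isQp_psub (heF.1 i) (hxF.1 i))).
  by move/(psub_zero 0 (heF.1 i) (hxF.1 i)); rewrite xk.
have [|G [fG hG]] := A_delta_near hU.
  by split; [exact: inQpX_vzero|move=> i; exact: pzero_n].
apply: (sub_finite_set (B := (\bigcup_(j in G) [set i | A (delta p j) i 0%N != 0]) `*` G)).
  move=> [i j] /= nz; have [Gj|nGj] := pselect (G j).
    by split=> //; exists j.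
  by move: nz; have [_ ->] := hG j nGj; rewrite eqxx.
apply: finite_setX => //; apply: bigcup_finite => // j _; exact: A_col.
Qed.

End Forward.

Lemma main_equiv (hM : forall i j, isQp p (M i j)) :
  (exists A : (X -> Qp) -> (X -> Qp),
      in_B p A /\ forall i j, M i j = A (delta p j) i)
  <->
  (finite_set [set ij : X * X | 1 < pnorm p (M ij.1 ij.2)] /\
   forall k : X,
     (forall eps : rat, 0 < eps -> finite_set [set i | eps < pnorm p (M i k)]) /\
     (forall eps : rat, 0 < eps -> finite_set [set j | eps < pnorm p (M k j)])).
Proof.
split.
  move=> [A [hA hMA]]; split.
    apply: (sub_finite_set _ (A_big hA)) => [[i j]] /=.
    by move/(pnorm_gt1 (hM i j)); rewrite hMA.
  move=> k; split=> eps heps; have [m hm] := exists_m heps.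
    apply: (sub_finite_set _ (A_col hA k m)) => i /= lt; rewrite -hMA.
    apply/negP => /eqP /(pnorm_le m (hM i k)) le.
    by move: lt; rewrite ltNge (le_trans le (ltW hm)).
  apply: (sub_finite_set _ (A_row hA k m)) => j /= lt; rewrite -hMA.
  apply/negP => /eqP /(pnorm_le m (hM k j)) le.
  by move: lt; rewrite ltNge (le_trans le (ltW hm)).
move=> [hbig hk].
have H0 : finite_set [set ij : X * X | M ij.1 ij.2 0%N != 0].
  by apply: (sub_finite_set _ hbig) => [[i j]] /= /(pnorm_gt1 (hM i j)).
have Hcol : forall k m, finite_set [set i | M i k m != 0].
  move=> k m; apply: sub_finite_set ((hk k).1 _ (Pinv_gt0 m)) => i /= nz.
  by rewrite ltNge; apply/negP => /(pnorm_le m (hM i k)) /eqP; apply/negP.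
have Hrow : forall k m, finite_set [set j | M k j m != 0].
  move=> k m; apply: sub_finite_set ((hk k).2 _ (Pinv_gt0 m)) => j /= nz.
  by rewrite ltNge; apply/negP => /(pnorm_le m (hM k j)) /eqP; apply/negP.
exists Aop; exact: (back_dir hM H0 Hcol Hrow).
Qed.

End Arith.

Unset Implicit Arguments.
Set Strict Implicit.

Theorem theorem2p26 (p : nat) (X : countType) (hp : prime p)
  (M : X -> X -> Qp) (hM : forall i j, isQp p (M i j)) :
  (exists A : (X -> Qp) -> (X -> Qp),
      in_B p A /\ forall i j, M i j = A (delta p j) i)
  <->
  (finite_set [set ij : X * X | 1 < pnorm p (M ij.1 ij.2)] /\
   forall k : X,
     (forall eps : rat, 0 < eps -> finite_set [set i | eps < pnorm p (M i k)]) /\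
     (forall eps : rat, 0 < eps -> finite_set [set j | eps < pnorm p (M k j)])).
Proof. exact: (@main_equiv p (prime_gt1 hp) X M hM). Qed.
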